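(* Let $x,y>0$, $r,s\in\mathbb{R}$, and $F_{r,s;x,y}(w)=E(r+w,s+w;x,y)$ for $w\in\mathbb{R}$. Then for every $w\in\mathbb{R}$, $$\frac{F_{r,s;x,y}'(w)}{F_{r,s;x,y}(w)}=\frac{F_{r,s;x,y}'(-w-(s+r))}{F_{r,s;x,y}(-w-(s+r))} \quad\text{and}\quad F_{r,s;x,y}(w)\,F_{r,s;x,y}(-w)=\frac{xy\,F_{r,s;x,y}(w)}{F_{r,s;x,y}(w-(s+r))}.$$
   Context: For $x,y>0$ and $r,s\in\mathbb{R}$ the extended mean values are defined by $E(r,s;x,y)=\bigl(\frac{r}{s}\cdot\frac{y^s-x^s}{y^r-x^r}\bigr)^{1/(s-r)}$ if $rs(r-s)(x-y)\neq0$; $E(r,0;x,y)=E(0,r;x,y)=\bigl(\frac1r\cdot\frac{y^r-x^r}{\ln y-\ln x}\bigr)^{1/r}$ if $r(x-y)\neq0$; $E(r,r;x,y)=e^{-1/r}\bigl(\frac{x^{x^r}}{y^{y^r}}\bigr)^{1/(x^r-y^r)}$ if $r(x-y)\neq0$; $E(0,0;x,y)=\sqrt{xy}$ if $x\neq y$; $E(r,s;x,x)=x$. *)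

(* Defs.v *)
From Stdlib Require Import Reals Lra.
Open Scope R_scope.

Definition E (r s x y : R) : R :=
  if Req_EM_T x y then x
  else if Req_EM_T r 0 then
    (if Req_EM_T s 0 then sqrt (x * y)
     else Rpower ((1 / s) * ((Rpower y s - Rpower x s) / (ln y - ln x))) (1 / s))
  else if Req_EM_T s 0 then
    Rpower ((1 / r) * ((Rpower y r - Rpower x r) / (ln y - ln x))) (1 / r)
  else if Req_EM_T r s then
    exp (- (1 / r)) *
    Rpower (Rpower x (Rpower x r) / Rpower y (Rpower y r))
           (1 / (Rpower x r - Rpower y r))
  else
    Rpower ((r / s) * ((Rpower y s - Rpower x s) / (Rpower y r - Rpower x r)))
           (1 / (s - r)).

Definition F (r s x y : R) (w : R) : R := E (r + w) (s + w) x y.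

(* Main.v *)
Require Import Defs.
From Stdlib Require Import Reals Lra.
Open Scope R_scope.

Lemma D_eq f x l l' : derivable_pt_lim f x l -> l = l' -> derivable_pt_lim f x l'.
Proof. intros H ->; exact H. Qed.
Lemma D_plus f g x l1 l2 : derivable_pt_lim f x l1 -> derivable_pt_lim g x l2 ->
  derivable_pt_lim (fun t => f t + g t) x (l1 + l2).
Proof. intros; apply (derivable_pt_lim_plus f g); auto. Qed.
Lemma D_minus f g x l1 l2 : derivable_pt_lim f x l1 -> derivable_pt_lim g x l2 ->
  derivable_pt_lim (fun t => f t - g t) x (l1 - l2).
Proof. intros; apply (derivable_pt_lim_minus f g); auto. Qed.
Lemma D_mult f g x l1 l2 : derivable_pt_lim f x l1 -> derivable_pt_lim g x l2 ->
  derivable_pt_lim (fun t => f t * g t) x (l1 * g x + f x * l2).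
Proof. intros; apply (derivable_pt_lim_mult f g); auto. Qed.
Lemma D_div f g x l1 l2 : derivable_pt_lim f x l1 -> derivable_pt_lim g x l2 -> g x <> 0 ->
  derivable_pt_lim (fun t => f t / g t) x ((l1 * g x - l2 * f x) / Rsqr (g x)).
Proof. intros; apply (derivable_pt_lim_div f g); auto. Qed.
Lemma D_comp f g x l1 l2 : derivable_pt_lim g x l1 -> derivable_pt_lim f (g x) l2 ->
  derivable_pt_lim (fun t => f (g t)) x (l2 * l1).
Proof. intros; apply (derivable_pt_lim_comp g f); auto. Qed.
Lemma D_const a x : derivable_pt_lim (fun _ => a) x 0.
Proof. apply derivable_pt_lim_const. Qed.
Lemma D_id x : derivable_pt_lim (fun t => t) x 1.
Proof. apply derivable_pt_lim_id. Qed.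
Lemma D_exp x : derivable_pt_lim exp x (exp x).
Proof. apply derivable_pt_lim_exp. Qed.

Lemma step (f g : R -> R) (n : nat) : f 0 = 0 -> (forall t, derivable_pt_lim f t (g t)) ->
  (forall t, Rabs (g t) <= Rabs t ^ n * exp (Rabs t)) ->
  forall h, Rabs (f h) <= Rabs h ^ (S n) * exp (Rabs h).
Proof.
  intros f0 Df Bg h.
  destruct (MVT_abs f g 0 h (fun c _ => Df c)) as [c [Hc Hr]].
  rewrite f0, Rminus_0_r, Rminus_0_r in Hc. rewrite Hc.
  assert (Hch : Rabs c <= Rabs h).
  { unfold Rmin, Rmax in Hr; destruct (Rle_dec 0 h);
    unfold Rabs; destruct (Rcase_abs c); destruct (Rcase_abs h); lra. }
  assert (Hg := Bg c).
  assert (H1 : Rabs c ^ n <= Rabs h ^ n) by (apply pow_incr; split; [apply Rabs_pos|lra]).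
  assert (H2 : exp (Rabs c) <= exp (Rabs h)).
  { destruct (Req_dec (Rabs c) (Rabs h)) as [e|ne]; [rewrite e; lra|].
    left; apply exp_increasing; lra. }
  simpl.
  assert (0 <= Rabs c ^ n) by (apply pow_le, Rabs_pos).
  assert (0 < exp (Rabs c)) by apply exp_pos.
  assert (0 <= Rabs h) by apply Rabs_pos.
  assert (Rabs (g c) <= Rabs h ^ n * exp (Rabs h)).
  { apply Rle_trans with (1 := Hg). apply Rmult_le_compat; lra. }
  rewrite Rmult_comm, Rmult_assoc. apply Rmult_le_compat_l; lra.
Qed.

Definition R1 t := exp t - 1.
Definition R2 t := exp t - 1 - t.
Definition R3 t := exp t - 1 - t - t*t/2.
Definition R4 t := exp t - 1 - t - t*t/2 - t*t*t/6.

Lemma bound1 h : Rabs (R1 h) <= Rabs h ^ 1 * exp (Rabs h).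
Proof.
  apply (step R1 exp 0).
  - unfold R1; rewrite exp_0; ring.
  - intro t; unfold R1. apply D_eq with (exp t - 0). apply D_minus; [apply D_exp|apply D_const]. ring.
  - intro t; simpl. rewrite Rabs_right by (left; apply exp_pos). rewrite Rmult_1_l.
    destruct (Req_dec t (Rabs t)) as [e|ne]; [rewrite <- e; lra|].
    left; apply exp_increasing. assert (t <= Rabs t) by apply Rle_abs. lra.
Qed.
Lemma bound2 h : Rabs (R2 h) <= Rabs h ^ 2 * exp (Rabs h).
Proof.
  apply (step R2 R1 1).
  - unfold R2; rewrite exp_0; ring.
  - intro t; unfold R2, R1. apply D_eq with (exp t - 0 - 1).
    apply D_minus; [apply D_minus; [apply D_exp|apply D_const]|apply D_id]. ring.
  - apply bound1.
Qed.
Lemma bound3 h : Rabs (R3 h) <= Rabs h ^ 3 * exp (Rabs h).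
Proof.
  apply (step R3 R2 2).
  - unfold R3; rewrite exp_0; field.
  - intro t; unfold R3, R2.
    apply D_eq with (exp t - 0 - 1 - ((((1 * t + t * 1) * 2 - 0 * (t*t)) / Rsqr 2))).
    apply D_minus; [apply D_minus; [apply D_minus; [apply D_exp|apply D_const]|apply D_id]|].
    apply (D_div (fun t => t*t) (fun _ => 2)). apply (D_mult (fun u => u) (fun u => u)); apply D_id. apply D_const. lra.
    unfold Rsqr; field.
  - apply bound2.
Qed.
Lemma bound4 h : Rabs (R4 h) <= Rabs h ^ 4 * exp (Rabs h).
Proof.
  apply (step R4 R3 3).
  - unfold R4; rewrite exp_0; field.
  - intro t; unfold R4, R3.
    apply D_eq with (exp t - 0 - 1 - ((((1 * t + t * 1) * 2 - 0 * (t*t)) / Rsqr 2))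
       - ((((1 * t + t * 1) * t + (t*t) * 1) * 6 - 0 * (t*t*t)) / Rsqr 6)).
    apply D_minus; [apply D_minus; [apply D_minus; [apply D_minus; [apply D_exp|apply D_const]|apply D_id]|]|].
    apply (D_div (fun t => t*t) (fun _ => 2)). apply (D_mult (fun u => u) (fun u => u)); apply D_id. apply D_const. lra.
    apply (D_div (fun t => t*t*t) (fun _ => 6)). apply (D_mult (fun u => u*u) (fun u => u)). apply (D_mult (fun u => u) (fun u => u)); apply D_id. apply D_id. apply D_const. lra.
    unfold Rsqr; field.
  - apply bound3.
Qed.
Definition K u := if Req_EM_T u 0 then 1 else (exp u - 1) / u.
Definition K1 u := if Req_EM_T u 0 then / 2 else (u * exp u - exp u + 1) / (u * u).

Lemma exp_gt1 u : 0 < u -> 1 < exp u.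
Proof. intro; rewrite <- exp_0; apply exp_increasing; lra. Qed.
Lemma exp_lt1 u : u < 0 -> exp u < 1.
Proof. intro; rewrite <- exp_0; apply exp_increasing; lra. Qed.

Lemma K_pos u : 0 < K u.
Proof.
  unfold K; destruct (Req_EM_T u 0); [lra|].
  destruct (Rlt_or_le 0 u).
  - apply Rdiv_lt_0_compat; [|lra]. assert (1 < exp u) by (apply exp_gt1; lra). lra.
  - assert (exp u < 1) by (apply exp_lt1; lra).
    replace ((exp u - 1) / u) with ((1 - exp u) / (- u)) by (field; lra).
    apply Rdiv_lt_0_compat; lra.
Qed.

Lemma K_neg u : K (- u) = exp (- u) * K u.
Proof.
  unfold K; destruct (Req_EM_T u 0) as [e|n].
  - subst. rewrite Ropp_0, exp_0. destruct (Req_EM_T 0 0); [ring|lra].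
  - destruct (Req_EM_T (-u) 0); [lra|].
    rewrite exp_Ropp. assert (0 < exp u) by apply exp_pos. field; lra.
Qed.

Lemma loc_nz u : u <> 0 -> forall z, u - Rabs u < z < u + Rabs u -> z <> 0.
Proof. intros Hu z Hz; unfold Rabs in Hz; destruct (Rcase_abs u); lra. Qed.
Lemma loc_in u : u <> 0 -> u - Rabs u < u < u + Rabs u.
Proof. intros Hu; unfold Rabs; destruct (Rcase_abs u); lra. Qed.

Lemma exp_abs_le h : Rabs h < 1 -> exp (Rabs h) <= 3.
Proof.
  intro H. apply Rle_trans with (exp 1); [left; apply exp_increasing; lra|apply exp_le_3].
Qed.

Lemma K_der u : derivable_pt_lim K u (K1 u).
Proof.
  destruct (Req_dec u 0) as [e|n].
  - subst u. intros eps Heps.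
    assert (Hd : 0 < Rmin 1 (eps / 3)) by (apply Rmin_pos; lra).
    exists (mkposreal _ Hd); simpl; intros h hn hl.
    assert (h1 : Rabs h < 1) by (apply Rlt_le_trans with (1 := hl); apply Rmin_l).
    assert (h2 : Rabs h < eps/3) by (apply Rlt_le_trans with (1 := hl); apply Rmin_r).
    unfold K, K1; rewrite Rplus_0_l.
    destruct (Req_EM_T h 0); [lra|]. destruct (Req_EM_T 0 0); [|lra].
    replace (((exp h - 1) / h - 1) / h - / 2) with (R3 h / (h * h)) by (unfold R3; field; lra).
    assert (B := bound3 h). assert (E3 := exp_abs_le h h1).
    assert (0 < Rabs h) by (apply Rabs_pos_lt; lra).
    unfold Rdiv; rewrite Rabs_mult, Rabs_inv, Rabs_mult. apply (Rmult_lt_reg_r (Rabs h * Rabs h)); [nra|].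
    replace (Rabs (R3 h) * / (Rabs h * Rabs h) * (Rabs h * Rabs h)) with (Rabs (R3 h)) by (field; lra).
    simpl in B. set (A := Rabs h) in *. set (X := exp A) in *.
    assert (0 <= A*A) by nra.
    assert (A*A*X <= A*A*3) by (apply Rmult_le_compat_l; lra).
    assert (A*(A*A) < eps/3 * (A*A)) by (apply Rmult_lt_compat_r; nra).
    nra.
  - refine (derivable_pt_lim_locally_ext (fun v => (exp v - 1) / v) K u (u - Rabs u) (u + Rabs u) _ _ _ _).
    + apply loc_in; auto.
    + intros z Hz. unfold K. destruct (Req_EM_T z 0); [exfalso; eapply loc_nz; eauto|auto].
    + apply D_eq with (((exp u - 0) * u - 1 * (exp u - 1)) / Rsqr u).
      apply (D_div (fun v => exp v - 1) (fun v => v)); auto. apply D_minus; [apply D_exp|apply D_const]. apply D_id.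
      unfold K1. destruct (Req_EM_T u 0); [lra|]. unfold Rsqr; field; auto.
Qed.

Lemma K1_der u : exists l, derivable_pt_lim K1 u l.
Proof.
  destruct (Req_dec u 0) as [e|n].
  - subst u. exists (/3). intros eps Heps.
    assert (Hd : 0 < Rmin 1 (eps / 6)) by (apply Rmin_pos; lra).
    exists (mkposreal _ Hd); simpl; intros h hn hl.
    assert (h1 : Rabs h < 1) by (apply Rlt_le_trans with (1 := hl); apply Rmin_l).
    assert (h2 : Rabs h < eps/6) by (apply Rlt_le_trans with (1 := hl); apply Rmin_r).
    unfold K1; rewrite Rplus_0_l.
    destruct (Req_EM_T h 0); [lra|]. destruct (Req_EM_T 0 0); [|lra].
    replace (((h * exp h - exp h + 1) / (h * h) - / 2) / h - / 3)
      with ((h * R3 h - R4 h) / (h * h * h)) by (unfold R3, R4; field; lra).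
    assert (B3 := bound3 h). assert (B4 := bound4 h). assert (E3 := exp_abs_le h h1).
    assert (0 < Rabs h) by (apply Rabs_pos_lt; lra).
    assert (Hb : Rabs (h * R3 h - R4 h) <= 2 * (Rabs h ^ 4 * exp (Rabs h))).
    { eapply Rle_trans; [apply Rabs_triang|]. rewrite Rabs_Ropp, Rabs_mult.
      simpl in B3, B4. assert (Rabs h * Rabs (R3 h) <= Rabs h * (Rabs h * (Rabs h * (Rabs h * 1)) * exp (Rabs h)))
        by (apply Rmult_le_compat_l; lra). simpl. lra. }
    unfold Rdiv; rewrite Rabs_mult, Rabs_inv, !Rabs_mult. apply (Rmult_lt_reg_r (Rabs h * Rabs h * Rabs h)); [repeat apply Rmult_lt_0_compat; lra|].
    replace (Rabs (h * R3 h - R4 h) * / (Rabs h * Rabs h * Rabs h) * (Rabs h * Rabs h * Rabs h)) with (Rabs (h * R3 h - R4 h)) by (field; lra).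
    simpl in Hb. set (A := Rabs h) in *. set (X := exp A) in *.
    assert (0 <= A*A*A) by (repeat apply Rmult_le_pos; lra).
    assert (A*A*A*X <= A*A*A*3) by (apply Rmult_le_compat_l; lra).
    assert (A*(A*A*A) < eps/6 * (A*A*A)) by (apply Rmult_lt_compat_r; [repeat apply Rmult_lt_0_compat; lra|lra]).
    nra.
  - eexists.
    refine (derivable_pt_lim_locally_ext (fun v => (v * exp v - exp v + 1) / (v * v)) K1 u (u - Rabs u) (u + Rabs u) _ _ _ _).
    + apply loc_in; auto.
    + intros z Hz. unfold K1. destruct (Req_EM_T z 0); [exfalso; eapply loc_nz; eauto|auto].
    + apply (D_div (fun v => v * exp v - exp v + 1) (fun v => v * v)).
      * apply (D_plus (fun v => v * exp v - exp v)); [apply (D_minus (fun v => v * exp v)); [apply (D_mult (fun v => v) exp); [apply D_id|apply D_exp]|apply D_exp]|apply D_const].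
      * apply (D_mult (fun v => v) (fun v => v)); apply D_id.
      * apply Rmult_integral_contrapositive; auto.
Qed.

Definition psi a c t := t * a + ln (K (t * c)).
Definition psi1 a c t := a + c * K1 (t * c) / K (t * c).

Lemma psi_der a c t : derivable_pt_lim (psi a c) t (psi1 a c t).
Proof.
  unfold psi.
  apply D_eq with ((1 * a + t * 0) + (/ K (t * c)) * (K1 (t * c) * (1 * c + t * 0))).
  - apply (D_plus (fun t => t * a) (fun t => ln (K (t * c)))).
    + apply (D_mult (fun t => t) (fun _ => a)); [apply D_id|apply D_const].
    + apply (D_comp ln (fun t => K (t * c))).
      * apply (D_comp K (fun t => t * c)); [|apply K_der].
        apply (D_mult (fun t => t) (fun _ => c)); [apply D_id|apply D_const].
      * apply derivable_pt_lim_ln, K_pos.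
  - unfold psi1. assert (H := K_pos (t * c)). field. lra.
Qed.

Lemma psi_odd a c t : psi a c t - psi a c (- t) = t * (2 * a + c).
Proof.
  unfold psi. replace (- t * c) with (- (t * c)) by ring. rewrite K_neg.
  rewrite ln_mult by (apply exp_pos || apply K_pos). rewrite ln_exp. ring.
Qed.

Lemma D_neg f t l : derivable_pt_lim f (- t) l -> derivable_pt_lim (fun t => f (- t)) t (- l).
Proof.
  intro H. apply D_eq with (l * -1).
  apply (D_comp f (fun t => - t)); auto.
  apply D_eq with (- 1). apply (derivable_pt_lim_opp (fun t => t)). apply D_id. ring. ring.
Qed.

Lemma psi1_sym a c t : psi1 a c t + psi1 a c (- t) = 2 * a + c.
Proof.
  apply (uniqueness_limite (fun t => psi a c t - psi a c (- t)) t).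
  - apply D_eq with (psi1 a c t - - psi1 a c (- t)); [|ring].
    apply (D_minus (psi a c) (fun t => psi a c (- t))); [apply psi_der|].
    apply D_neg, psi_der.
  - apply derivable_pt_lim_ext with (f := fun t => t * (2 * a + c)).
    + intro z; symmetry; apply psi_odd.
    + apply D_eq with (1 * (2*a+c) + t * 0); [|ring].
      apply (D_mult (fun t => t) (fun _ => 2*a+c)); [apply D_id|apply D_const].
Qed.

Lemma psi1_der a c t : exists l, derivable_pt_lim (psi1 a c) t l.
Proof.
  destruct (K1_der (t * c)) as [l Hl].
  unfold psi1. eexists.
  apply (D_plus (fun _ => a) (fun t => c * K1 (t * c) / K (t * c))); [apply D_const|].
  apply (D_div (fun t => c * K1 (t * c)) (fun t => K (t * c))).
  - apply (D_mult (fun _ => c) (fun t => K1 (t * c))); [apply D_const|].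
    apply (D_comp K1 (fun t => t * c)); [|exact Hl].
    apply (D_mult (fun t => t) (fun _ => c)); [apply D_id|apply D_const].
  - apply (D_comp K (fun t => t * c)); [|apply K_der].
    apply (D_mult (fun t => t) (fun _ => c)); [apply D_id|apply D_const].
  - assert (H := K_pos (t * c)); lra.
Qed.

Lemma psi2_sym a c t l1 l2 : derivable_pt_lim (psi1 a c) t l1 ->
  derivable_pt_lim (psi1 a c) (- t) l2 -> l1 = l2.
Proof.
  intros H1 H2.
  assert (l1 + - l2 = 0); [|lra].
  apply (uniqueness_limite (fun t => psi1 a c t + psi1 a c (- t)) t).
  - apply (D_plus (psi1 a c) (fun t => psi1 a c (- t))); auto. apply D_neg; auto.
  - apply derivable_pt_lim_ext with (f := fun _ => 2 * a + c).
    + intro z; symmetry; apply psi1_sym.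
    + apply D_const.
Qed.

Lemma Rp_diff x y t : 0 < x -> 0 < y -> ln y <> ln x ->
  Rpower y t - Rpower x t = t * (ln y - ln x) * (exp (t * ln x) * K (t * (ln y - ln x))).
Proof.
  intros hx hy hne. unfold Rpower.
  destruct (Req_dec t 0) as [e|n].
  - subst t. rewrite !Rmult_0_l. ring.
  - unfold K. destruct (Req_EM_T (t * (ln y - ln x)) 0) as [e|n'].
    + exfalso. apply Rmult_integral in e. destruct e; [lra|]. apply hne; lra.
    + replace (t * ln y) with (t * ln x + t * (ln y - ln x)) by ring.
      rewrite exp_plus. field. split; [lra|auto].
Qed.

Lemma ln_Phi a c t : ln (exp (t * a) * K (t * c)) = psi a c t.
Proof. rewrite ln_mult by (apply exp_pos || apply K_pos). rewrite ln_exp. reflexivity. Qed.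

Lemma psi_0 a c : psi a c 0 = 0.
Proof. unfold psi, K. rewrite !Rmult_0_l. destruct (Req_EM_T 0 0); [|lra]. rewrite ln_1. ring. Qed.

Lemma ln_div' u v : 0 < u -> 0 < v -> ln (u / v) = ln u - ln v.
Proof. intros; unfold Rdiv; rewrite ln_mult; [rewrite ln_Rinv; [ring|auto]|auto|apply Rinv_0_lt_compat; auto]. Qed.

Lemma E_gen x y p q : 0 < x -> 0 < y -> x <> y -> p <> q ->
  E p q x y = exp ((psi (ln x) (ln y - ln x) q - psi (ln x) (ln y - ln x) p) / (q - p)).
Proof.
  intros hx hy hxy hpq.
  assert (hne : ln y <> ln x) by (intro e; apply hxy; symmetry; apply ln_inv; auto).
  assert (hc : ln y - ln x <> 0) by lra.
  unfold E. destruct (Req_EM_T x y) as [e|_]; [contradiction|].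
  destruct (Req_EM_T p 0) as [ep|np].
  - destruct (Req_EM_T q 0) as [eq|nq]; [subst; contradiction|].
    subst p. rewrite (Rp_diff x y q hx hy hne).
    unfold Rpower.
    replace (1 / q * (q * (ln y - ln x) * (exp (q * ln x) * K (q * (ln y - ln x))) / (ln y - ln x))) with (exp (q * ln x) * K (q * (ln y - ln x))) by (field; auto).
    rewrite ln_Phi, psi_0. f_equal. field; auto.
  - destruct (Req_EM_T q 0) as [eq|nq].
    + subst q. rewrite (Rp_diff x y p hx hy hne).
      unfold Rpower.
      replace (1 / p * (p * (ln y - ln x) * (exp (p * ln x) * K (p * (ln y - ln x))) / (ln y - ln x))) with (exp (p * ln x) * K (p * (ln y - ln x))) by (field; auto).
      rewrite ln_Phi, psi_0. f_equal. field; auto.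
    + destruct (Req_EM_T p q) as [e|_]; [contradiction|].
      rewrite (Rp_diff x y p hx hy hne), (Rp_diff x y q hx hy hne).
      unfold Rpower.
      assert (H1 := K_pos (p * (ln y - ln x))). assert (H2 := K_pos (q * (ln y - ln x))).
      assert (H3 := exp_pos (p * ln x)). assert (H4 := exp_pos (q * ln x)).
      replace (p / q * (q * (ln y - ln x) * (exp (q * ln x) * K (q * (ln y - ln x))) / (p * (ln y - ln x) * (exp (p * ln x) * K (p * (ln y - ln x))))))
        with ((exp (q * ln x) * K (q * (ln y - ln x))) / (exp (p * ln x) * K (p * (ln y - ln x)))) by (field; repeat split; auto; lra).
      rewrite ln_div' by (apply Rmult_lt_0_compat; auto). rewrite !ln_Phi.
      f_equal. field. lra.
Qed.

Lemma E_diag x y p : 0 < x -> 0 < y -> x <> y ->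
  E p p x y = exp (psi1 (ln x) (ln y - ln x) p).
Proof.
  intros hx hy hxy.
  assert (hne : ln y <> ln x) by (intro e; apply hxy; symmetry; apply ln_inv; auto).
  assert (hc : ln y - ln x <> 0) by lra.
  unfold E. destruct (Req_EM_T x y) as [e|_]; [contradiction|].
  destruct (Req_EM_T p 0) as [ep|np].
  - subst p. destruct (Req_EM_T 0 0); [|lra].
    rewrite <- Rpower_sqrt by (apply Rmult_lt_0_compat; auto).
    unfold Rpower, psi1, K, K1. rewrite Rmult_0_l. destruct (Req_EM_T 0 0); [|lra].
    rewrite ln_mult by auto. f_equal. field.
  - destruct (Req_EM_T p p) as [_|]; [|lra].
    unfold Rpower.
    set (a := ln x) in *. set (b := ln y) in *.
    replace (p * b) with (p * a + p * (b - a)) by ring.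
    rewrite exp_plus.
    set (X := exp (p * a)). set (U := exp (p * (b - a))).
    assert (hX : 0 < X) by apply exp_pos.
    assert (hU1 : U <> 1).
    { intro e. unfold U in e. rewrite <- exp_0 in e. apply exp_inv in e.
      apply Rmult_integral in e. destruct e; auto. }
    replace (exp (X * a) / exp (X * U * b)) with (exp (X * a - X * U * b))
      by (unfold Rminus; rewrite exp_plus, exp_Ropp; field; apply Rgt_not_eq, exp_pos).
    rewrite ln_exp, <- exp_plus. f_equal.
    unfold psi1, K, K1. destruct (Req_EM_T (p * (b - a)) 0) as [e|_].
    { apply Rmult_integral in e. destruct e; contradiction. }
    fold U.
    assert (X - X * U <> 0). { intro e. apply hU1. apply (Rmult_eq_reg_l X); [|lra]. lra. }
    assert (U - 1 <> 0) by lra.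
    field. repeat split; auto.
Qed.

Lemma D_shift f r z l : derivable_pt_lim f (r + z) l -> derivable_pt_lim (fun z => f (r + z)) z l.
Proof.
  intro H. apply D_eq with (l * (0 + 1)); [|ring].
  apply (D_comp f (fun z => r + z)); auto.
  apply (D_plus (fun _ => r) (fun z => z)); [apply D_const|apply D_id].
Qed.

Lemma exp_xy x y : 0 < x -> 0 < y -> exp (2 * ln x + (ln y - ln x)) = x * y.
Proof. intros. replace (2 * ln x + (ln y - ln x)) with (ln x + ln y) by ring.
  rewrite exp_plus, !exp_ln; auto. Qed.

Theorem mainTheorem7 (x y r s : R) (hx : 0 < x) (hy : 0 < y) :
  forall w : R,
    (exists d1 d2 : R,
        derivable_pt_lim (F r s x y) w d1 /\
        derivable_pt_lim (F r s x y) (- w - (s + r)) d2 /\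
        d1 / F r s x y w = d2 / F r s x y (- w - (s + r))) /\
    F r s x y w * F r s x y (- w) =
      x * y * F r s x y w / F r s x y (w - (s + r)).
Proof.
  intros w.
  destruct (Req_dec x y) as [exy|nxy].
  - subst y.
    assert (HF : forall z, F r s x x z = x)
      by (intro; unfold F, E; destruct (Req_EM_T x x); [reflexivity|lra]).
    split.
    + exists 0, 0. split; [|split].
      * apply derivable_pt_lim_ext with (f := fun _ => x); [intro; rewrite HF; auto|apply D_const].
      * apply derivable_pt_lim_ext with (f := fun _ => x); [intro; rewrite HF; auto|apply D_const].
      * rewrite !HF; reflexivity.
    + rewrite !HF. field. lra.
  - set (a := ln x). set (c := ln y - ln x).
    assert (Hpos : forall z, 0 < F r s x y z).
    { intro z. unfold F. destruct (Req_dec (r + z) (s + z)) as [e|n].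
      - rewrite e, E_diag; auto. apply exp_pos.
      - rewrite E_gen; auto. apply exp_pos. }
    assert (Hprod : F r s x y (- w) * F r s x y (w - (s + r)) = x * y).
    2:{ split; [|rewrite <- Hprod; assert (H := Hpos (w - (s + r))); field; lra].
        destruct (Req_dec r s) as [ers|nrs].
        - subst s.
          assert (HF : forall z, F r r x y z = exp (psi1 a c (r + z)))
            by (intro z; unfold F; apply E_diag; auto).
          destruct (psi1_der a c (r + w)) as [l1 H1].
          destruct (psi1_der a c (r + (- w - (r + r)))) as [l2 H2].
          exists (exp (psi1 a c (r + w)) * l1), (exp (psi1 a c (r + (- w - (r + r)))) * l2).
          split; [|split].
          + apply derivable_pt_lim_ext with (f := fun z => exp (psi1 a c (r + z))); [intro; rewrite HF; auto|].
            apply (D_comp exp (fun z => psi1 a c (r + z))); [apply D_shift; auto|apply D_exp].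
          + apply derivable_pt_lim_ext with (f := fun z => exp (psi1 a c (r + z))); [intro; rewrite HF; auto|].
            apply (D_comp exp (fun z => psi1 a c (r + z))); [apply D_shift; auto|apply D_exp].
          + rewrite !HF.
            replace (r + (- w - (r + r))) with (- (r + w)) in H2 |- * by ring.
            rewrite (psi2_sym a c (r + w) l1 l2 H1 H2).
            assert (0 < exp (psi1 a c (r + w))) by apply exp_pos.
            assert (0 < exp (psi1 a c (- (r + w)))) by apply exp_pos.
            field. lra.
        - set (G := fun z => (psi a c (s + z) - psi a c (r + z)) / (s - r)).
          set (G1 := fun z => (psi1 a c (s + z) - psi1 a c (r + z)) / (s - r)).
          assert (HF : forall z, F r s x y z = exp (G z)).
          { intro z. unfold F, G. rewrite E_gen; auto.
            - f_equal. f_equal. ring.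
            - intro e; apply nrs; lra. }
          assert (HD : forall z, derivable_pt_lim (F r s x y) z (exp (G z) * G1 z)).
          { intro z. apply derivable_pt_lim_ext with (f := fun z => exp (G z)); [intro; rewrite HF; auto|].
            apply (D_comp exp G); [|apply D_exp].
            unfold G, G1.
            apply D_eq with (((psi1 a c (s + z) - psi1 a c (r + z)) * (s - r) - 0 * (psi a c (s + z) - psi a c (r + z))) / Rsqr (s - r)).
            - apply (D_div (fun z => psi a c (s + z) - psi a c (r + z)) (fun _ => s - r)); [|apply D_const|lra].
              apply (D_minus (fun z => psi a c (s + z)) (fun z => psi a c (r + z))); apply D_shift; apply psi_der.
            - unfold Rsqr; field; lra. }
          exists (exp (G w) * G1 w), (exp (G (- w - (s + r))) * G1 (- w - (s + r))).
          split; [apply HD|split; [apply HD|]].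
          rewrite !HF.
          assert (G1 (- w - (s + r)) = G1 w).
          { unfold G1.
            replace (s + (- w - (s + r))) with (- (r + w)) by ring.
            replace (r + (- w - (s + r))) with (- (s + w)) by ring.
            assert (A1 := psi1_sym a c (r + w)). assert (A2 := psi1_sym a c (s + w)).
            field_simplify; [|lra|lra]. f_equal. lra. }
          rewrite H.
          assert (0 < exp (G w)) by apply exp_pos.
          assert (0 < exp (G (- w - (s + r)))) by apply exp_pos.
          field. lra. }
    destruct (Req_dec r s) as [ers|nrs].
    + subst s. unfold F. rewrite !E_diag; auto. rewrite <- exp_plus.
      replace (r + (w - (r + r))) with (- (r + - w)) by ring.
      rewrite psi1_sym. apply exp_xy; auto.
    + unfold F. rewrite !E_gen; auto; try (intro e; apply nrs; lra).
      rewrite <- exp_plus. fold c. fold a.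
      replace ((psi a c (s + - w) - psi a c (r + - w)) / (s + - w - (r + - w)) +
               (psi a c (s + (w - (s + r))) - psi a c (r + (w - (s + r)))) / (s + (w - (s + r)) - (r + (w - (s + r)))))
        with (((psi a c (s - w) - psi a c (- (s - w))) - (psi a c (r - w) - psi a c (- (r - w)))) / (s - r)).
      * rewrite !psi_odd. replace (((s - w) * (2 * a + c) - (r - w) * (2 * a + c)) / (s - r)) with (2 * a + c)
          by (field; lra). apply exp_xy; auto.
      * replace (s + - w) with (s - w) by ring. replace (r + - w) with (r - w) by ring.
        replace (s + (w - (s + r))) with (- (r - w)) by ring.
        replace (r + (w - (s + r))) with (- (s - w)) by ring.
        field. lra.
Qed.
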